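(* Let $d\ge 1$, $T\ge 1$, let $\mathcal{X}\subseteq\mathbb{R}^d$ be a non-empty closed convex set containing $\mathbf{0}$, and let $0<\mu\le L$. Let $f_1,\dots,f_T:\mathcal{X}\to[0,\infty)$ be differentiable functions such that, for every $t$ and all $x,y\in\mathcal{X}$, $$\frac{\mu}{2}\|y-x\|^2\le f_t(y)-f_t(x)-\langle\nabla f_t(x),y-x\rangle\le\frac{L}{2}\|y-x\|^2 .$$ Assume that each minimizer $x_t^\star=\arg\min_{x\in\mathcal{X}}f_t(x)$ lies in the interior of $\mathcal{X}$. Let the starting point be $x_0=\mathbf{0}$, let $C_{\mathcal{A}_o}$ be the quadratic-switching cost of the OMGD algorithm with $K=\lceil\frac{L+\mu}{2\mu}\ln 4\rceil$, and let $C_{\mathsf{OPT}}$ be the optimal offline quadratic-switching cost. Then $$\frac{C_{\mathcal{A}_o}}{C_{\mathsf{OPT}}}\le 4(L+5)+\frac{16(L+5)}{\mu}.$$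
   Context: $\|\cdot\|$ is the Euclidean norm and $\Pi_{\mathcal{X}}(y)=\arg\min_{z\in\mathcal{X}}\|z-y\|$ is the Euclidean projection. For a sequence $(y_1,\dots,y_T)\in\mathcal{X}^T$ with $y_0=x_0$, its quadratic-switching cost is $\sum_{t=1}^T\big(f_t(y_t)+\frac12\|y_t-y_{t-1}\|^2\big)$. $C_{\mathsf{OPT}}$ is the minimum of this cost over all $(y_1,\dots,y_T)\in\mathcal{X}^T$ (with $y_0=x_0$). The OMGD (online multiple gradient descent) algorithm with parameter $K$ produces $x_1=x_0$ and, for $t=2,\dots,T$: set $z_t^{(0)}=x_{t-1}$, for $k=1,\dots,K$ set $z_t^{(k)}=\Pi_{\mathcal{X}}\big(z_t^{(k-1)}-\frac1L\nabla f_{t-1}(z_t^{(k-1)})\big)$, and set $x_t=z_t^{(K)}$. $C_{\mathcal{A}_o}$ is the quadratic-switching cost of $(x_1,\dots,x_T)$. *)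

(* Defs.v *)
From HB Require Import structures.
From mathcomp Require Import all_boot all_order all_algebra.
From mathcomp Require Import all_classical all_reals all_analysis.
Set Implicit Arguments. Unset Strict Implicit. Unset Printing Implicit Defensive.
Import Order.TTheory GRing.Theory Num.Theory.
Import numFieldNormedType.Exports.
Local Open Scope classical_set_scope.
Local Open Scope ring_scope.

Section Defs.
Variables (R : realType) (d : nat).
Notation vec := 'rV[R]_d.

Definition dotp (u v : vec) : R := \sum_(i < d) u 0 i * v 0 i.
Definition sqnorm (u : vec) : R := dotp u u.
Definition enorm (u : vec) : R := Num.sqrt (sqnorm u).

Definition convex_set_of (X : set vec) : Prop :=
  forall x y, X x -> X y -> forall l : R, 0 <= l <= 1 ->
    X (l *: x + (1 - l) *: y).

Definition grad (f : vec -> R) (x : vec) : vec :=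
  \row_(i < d) ('d f x : vec -> R) (delta_mx 0 i).

(* Euclidean projection onto X: an argmin of ||z - y|| over z in X
   (unique for X nonempty closed convex). *)
Definition proj (X : set vec) (y : vec) : vec :=
  xget 0 [set z | X z /\ forall w, X w -> enorm (z - y) <= enorm (w - y)].

(* Quadratic-switching cost of y_1..y_T with y_0 := x0. *)
Definition qs_cost (f : nat -> vec -> R) (T : nat) (x0 : vec) (y : nat -> vec) : R :=
  \sum_(1 <= t < T.+1)
     (f t (y t) + 2^-1 * enorm (y t - (if t is t'.+1 then (if t' is 0 then x0 else y t') else x0)) ^+ 2).

Definition C_OPT (X : set vec) (f : nat -> vec -> R) (T : nat) (x0 : vec) : R :=
  inf [set c | exists y : nat -> vec,
                 (forall t, (1 <= t <= T)%N -> X (y t)) /\ c = qs_cost f T x0 y].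

Definition omgd_step (X : set vec) (f : nat -> vec -> R) (L : R) (s : nat) (z : vec) : vec :=
  proj X (z - L^-1 *: grad (f s) z).

(* OMGD iterates: x_1 = x0, x_t = (K inner steps on f_{t-1}) starting at x_{t-1}.
   (index 0 also returns x0.) *)
Fixpoint omgd (X : set vec) (f : nat -> vec -> R) (L : R) (K : nat) (x0 : vec) (t : nat) : vec :=
  match t with
  | 0 => x0
  | n.+1 => if n is 0 then x0 else iter K (omgd_step X f L n) (omgd X f L K x0 n)
  end.

Definition C_OMGD (X : set vec) (f : nat -> vec -> R) (L : R) (K T : nat) (x0 : vec) : R :=
  qs_cost f T x0 (omgd X f L K x0).

End Defs.

(* Main.v *)
Require Import Defs.
From HB Require Import structures.
From mathcomp Require Import all_boot all_order all_algebra.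
From mathcomp Require Import all_classical all_reals all_analysis.
From mathcomp Require Import ring lra.
Import Order.TTheory GRing.Theory Num.Theory.
Import numFieldNormedType.Exports.
Local Open Scope classical_set_scope.
Local Open Scope ring_scope.
Section Main.
Variables (R : realType) (d : nat).
Local Notation vec := 'rV[R]_d.


Lemma dotpC (u v : vec) : dotp u v = dotp v u.
Proof. by apply: eq_bigr => i _; rewrite mulrC. Qed.

Lemma dotpDl (u v w : vec) : dotp (u + v) w = dotp u w + dotp v w.
Proof. by rewrite /dotp -big_split; apply: eq_bigr => i _; rewrite mxE mulrDl. Qed.

Lemma dotpZl a (u w : vec) : dotp (a *: u) w = a * dotp u w.
Proof. by rewrite /dotp mulr_sumr; apply: eq_bigr => i _; rewrite mxE mulrA. Qed.

Lemma dotpNl (u w : vec) : dotp (- u) w = - dotp u w.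
Proof. by rewrite -scaleN1r dotpZl mulN1r. Qed.

Lemma dotpBl (u v w : vec) : dotp (u - v) w = dotp u w - dotp v w.
Proof. by rewrite dotpDl dotpNl. Qed.

Lemma dotpDr (u v w : vec) : dotp w (u + v) = dotp w u + dotp w v.
Proof. by rewrite dotpC dotpDl !(dotpC w). Qed.

Lemma dotpZr a (u w : vec) : dotp w (a *: u) = a * dotp w u.
Proof. by rewrite dotpC dotpZl dotpC. Qed.

Lemma dotpNr (u w : vec) : dotp w (- u) = - dotp w u.
Proof. by rewrite dotpC dotpNl dotpC. Qed.

Lemma dotpBr (u v w : vec) : dotp w (u - v) = dotp w u - dotp w v.
Proof. by rewrite dotpDr dotpNr. Qed.

Lemma sqnorm_ge0 (u : vec) : 0 <= sqnorm u.
Proof. by apply: sumr_ge0 => i _; rewrite -expr2 sqr_ge0. Qed.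

Lemma sqnormD (u v : vec) : sqnorm (u + v) = sqnorm u + 2 * dotp u v + sqnorm v.
Proof. rewrite /sqnorm dotpDl !dotpDr (dotpC v u); ring. Qed.

Lemma sqnormB (u v : vec) : sqnorm (u - v) = sqnorm u - 2 * dotp u v + sqnorm v.
Proof. rewrite /sqnorm dotpBl !dotpBr (dotpC v u); ring. Qed.

Lemma sqnormZ a (u : vec) : sqnorm (a *: u) = a ^+ 2 * sqnorm u.
Proof. rewrite /sqnorm dotpZl dotpZr; ring. Qed.

Lemma sqnormN (u : vec) : sqnorm (- u) = sqnorm u.
Proof. by rewrite /sqnorm dotpNl dotpNr opprK. Qed.

Lemma sqnorm0 : sqnorm (0 : vec) = 0.
Proof. by rewrite -(scale0r (0 : vec)) sqnormZ expr0n mul0r. Qed.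

Lemma sqnorm_sym (u v : vec) : sqnorm (u - v) = sqnorm (v - u).
Proof. by rewrite -sqnormN opprB. Qed.

Lemma enorm_sq (u : vec) : enorm u ^+ 2 = sqnorm u.
Proof. by rewrite /enorm sqr_sqrtr // sqnorm_ge0. Qed.

Lemma young2 c (u v : vec) : 0 < c -> 2 * dotp u v <= c * sqnorm u + c^-1 * sqnorm v.
Proof.
move=> c0; have h := sqnorm_ge0 (c *: u - v).
rewrite sqnormB sqnormZ dotpZl in h.
have e : c * (c * sqnorm u + c^-1 * sqnorm v - 2 * dotp u v) =
         c ^+ 2 * sqnorm u - 2 * (c * dotp u v) + sqnorm v.
  by field; rewrite gt_eqF.
rewrite -subr_ge0; rewrite -e in h.
by rewrite -(pmulr_rge0 _ c0).
Qed.

Lemma sqnorm_addle c (u v : vec) : 0 < c ->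
  sqnorm (u + v) <= (1 + c) * sqnorm u + (1 + c^-1) * sqnorm v.
Proof. move=> c0; have := young2 c u v c0; rewrite sqnormD; lra. Qed.

Lemma sqnorm_add2 (u v : vec) : sqnorm (u + v) <= 2 * sqnorm u + 2 * sqnorm v.
Proof. have := sqnorm_addle 1 u v (@ltr01 R); rewrite invr1; lra. Qed.

Lemma young_lb mu (g u : vec) : 0 < mu ->
  - (mu^-1 * sqnorm g) - mu / 4 * sqnorm u <= dotp g u.
Proof.
move=> m0; have c0 : 0 < 2 / mu by rewrite divr_gt0.
have := young2 (2 / mu) (- g) u c0.
rewrite dotpNl sqnormN invf_div.
have -> : 2 / mu * sqnorm g = 2 * (mu^-1 * sqnorm g) by rewrite mulrA.
have -> : mu / 2 * sqnorm u = 2 * (mu / 4 * sqnorm u).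
  by rewrite mulrA; congr (_ * _); field.
lra.
Qed.

Lemma lim0 (a b : R) : (forall l, 0 < l -> l < 1 -> 0 <= a + l * b) -> 0 <= a.
Proof.
move=> h; case: (leP 0 a) => // a0.
case: (leP b 0) => b0.
  have i0 : 0 < 2^-1 :> R by rewrite invr_gt0.
  have i1 : 2^-1 < 1 :> R by rewrite invf_lt1 // ltr1n.
  have := h _ i0 i1.
  nra.
have ba : 0 < b - a by lra.
have := h (- a / (b - a)).
rewrite divr_gt0 ?oppr_gt0 //.
have -> : a + - a / (b - a) * b = - (a ^+ 2) / (b - a) by field; rewrite gt_eqF.
have hh : - a / (b - a) < 1 by rewrite ltr_pdivrMr // mul1r; lra.
move=> /(_ isT) /(_ hh).
rewrite pmulr_lge0 ?invr_gt0 // oppr_ge0 => h2.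
have : 0 < a ^+ 2 by rewrite exprn_gt0 //= ?lt0r; nra.
lra.
Qed.

Lemma lim0d (a b dl : R) : 0 < dl ->
  (forall l, 0 < l -> l < dl -> 0 <= a + l * b) -> 0 <= a.
Proof.
move=> d0 h; apply: (@lim0 a (dl * b)) => l l0 l1.
rewrite mulrA; apply: h; first by rewrite mulr_gt0.
by rewrite -[X in _ < X]mulr1 mulrC ltr_pM2l.
Qed.


Lemma coord_sq_le (u : vec) (j : 'I_d) : u 0 j ^+ 2 <= sqnorm u.
Proof.
rewrite /sqnorm /dotp (bigD1 j) //= -expr2 lerDl.
by apply: sumr_ge0 => i _; rewrite -expr2 sqr_ge0.
Qed.

Lemma mxnorm_le (u : vec) : `|u| <= Num.sqrt (sqnorm u).
Proof.
rewrite [leLHS]/Num.norm /= mx_normrE; apply: bigmax_le => //= -[i j] _ /=.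
rewrite (ord1 i) -sqrtr_sqr ler_sqrt ?sqnorm_ge0 //.
exact: coord_sq_le.
Qed.

Lemma cont_sum (I : Type) (r : seq I) (F : I -> vec -> R) :
  (forall i, continuous (F i)) -> continuous (fun w => \sum_(i <- r) F i w).
Proof.
move=> hF; elim: r => [|a r IH].
  rewrite (_ : (fun w => _) = fun=> 0); first exact: cst_continuous.
  by apply: funext => w; rewrite big_nil.
rewrite (_ : (fun w => _) = (F a) + (fun w => \sum_(i <- r) F i w)).
  by move=> x; apply: continuousD; [exact: hF | exact: IH].
by apply: funext => w; rewrite big_cons.
Qed.

Lemma sqnorm_cont (y : vec) : continuous (fun w : vec => sqnorm (w - y)).
Proof.
apply: cont_sum => i x.
have hc : {for x, continuous (fun w : vec => (w - y) 0 i)}.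
  rewrite (_ : (fun w : vec => _) = (fun w : vec => w 0 i) - (fun=> y 0 i)).
    by apply: continuousB; [exact: coord_continuous | exact: cst_continuous].
  by apply: funext => w; rewrite !mxE.
exact: continuousM.
Qed.

Lemma exists_argmin (X : set vec) (phi : vec -> R) (x0 : vec) (a b : R) :
  closed X -> X x0 -> (forall x, X x -> {for x, continuous phi}) ->
  0 < b -> 0 <= a ->
  (forall w, X w -> phi x0 - a + b * sqnorm (w - x0) <= phi w) ->
  exists z, X z /\ (forall w, X w -> phi z <= phi w).
Proof.
move=> cX Xx0 cphi b0 a0 coer.
set M := `|x0| + Num.sqrt (a / b).
set S := X `&` closed_ball_ Num.norm (0 : vec) M.
have cS : closed S by apply: closedI => //; exact: closed_closed_ball_.
have bS : bounded_set S.
  exists M; split; first by rewrite num_real.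
  move=> M' hM' w [_ hw]; rewrite /closed_ball_ /= sub0r normrN in hw.
  by rewrite /= (le_trans hw) // ltW.
have kS : compact S by exact: bounded_closed_compact.
have S0 : S !=set0.
  exists x0; split => //; rewrite /closed_ball_ /= sub0r normrN.
  by rewrite /M lerDl sqrtr_ge0.
have cphiS : {within S, continuous phi}.
  by apply: continuous_in_subspaceT => x /set_mem [Xx _]; exact: cphi.
have [c /set_mem [Xc Sc] hc] := EVT_min_rV S0 kS cphiS.
exists c; split => // w Xw.
case: (leP `|w| M) => hw.
  by apply: hc; apply/mem_set; split => //; rewrite /closed_ball_ /= sub0r normrN.
have Sx0 : S x0.
  split => //; rewrite /closed_ball_ /= sub0r normrN.
  by rewrite /M lerDl sqrtr_ge0.
apply: (le_trans (hc x0 (mem_set Sx0))).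
have tri : `|w| <= `|x0| + `|w - x0|.
  by rewrite -[X in `|X|](subrKC x0 w) ler_normD.
have h1 : Num.sqrt (a / b) < Num.sqrt (sqnorm (w - x0)).
  apply: (lt_le_trans _ (mxnorm_le _)); rewrite /M in hw; lra.
have sp : 0 < sqnorm (w - x0).
  by rewrite -sqrtr_gt0; apply: le_lt_trans h1; exact: sqrtr_ge0.
rewrite ltr_sqrt // in h1.
have h2 : a < b * sqnorm (w - x0) by rewrite -ltr_pdivrMl // mulrC.
have := coer w Xw; lra.
Qed.


Lemma proj_spec (X : set vec) (y : vec) : closed X -> X !=set0 -> convex_set_of X ->
  X (Defs.proj X y) /\ forall z, X z -> 0 <= dotp (Defs.proj X y - y) (z - Defs.proj X y).
Proof.
move=> cX [x0 Xx0] cvX.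
have ex : exists z, X z /\ forall w, X w -> sqnorm (z - y) <= sqnorm (w - y).
  apply: (@exists_argmin X (fun w => sqnorm (w - y)) x0 (2 * sqnorm (x0 - y)) (2^-1)) => //.
  - by move=> x _; exact: sqnorm_cont.
  - by rewrite mulr_ge0 // sqnorm_ge0.
  - move=> w Xw.
    have e : w - x0 = (w - y) + (y - x0) by rewrite addrA subrK.
    have := sqnorm_add2 (w - y) (y - x0); rewrite -e (sqnorm_sym y x0).
    lra.
have ex' : exists z, (fun z => X z /\ forall w, X w -> enorm (z - y) <= enorm (w - y)) z.
  have [z [Xz hz]] := ex; exists z; split => // w Xw.
  by rewrite /enorm ler_sqrt ?sqnorm_ge0 // hz.
have [Xp hp] := xgetPex 0 ex'.
rewrite /Defs.proj; set p := xget _ _ in Xp hp *.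
split => // z Xz.
pose b := sqnorm (z - p) / 2.
apply: (@lim0 _ b) => l l0 l1.
have Xw : X (l *: z + (1 - l) *: p) by apply: cvX => //; apply/andP; split; lra.
have := hp _ Xw.
rewrite /enorm ler_sqrt ?sqnorm_ge0 //.
have -> : l *: z + (1 - l) *: p - y = (p - y) + l *: (z - p).
  by apply/rowP => i; rewrite !mxE; ring.
rewrite [X in _ <= X]sqnormD dotpZr sqnormZ => h.
have : 0 <= (2 * l) * (dotp (p - y) (z - p) + l * b).
  rewrite /b; lra.
by rewrite pmulr_rge0 // mulr_gt0.
Qed.

Lemma grad0 (X : set vec) (phi : vec -> R) (z : vec) (L : R) :
  interior X z -> (forall w, X w -> phi z <= phi w) ->
  (forall w, X w -> phi w - phi z - dotp (grad phi z) (w - z) <= L / 2 * sqnorm (w - z)) ->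
  forall v, dotp (grad phi z) v = 0.
Proof.
move=> iz zmin up.
suff pos : forall v, 0 <= dotp (grad phi z) v.
  move=> v; apply/eqP; rewrite eq_le pos andbT.
  by have := pos (- v); rewrite dotpNr oppr_ge0.
move=> v; move/nbhs_ballP: iz => [e /= e0 be].
have v1 : 0 < `|v| + 1 by rewrite ltr_wpDl.
apply: (@lim0d (dotp (grad phi z) v) (L / 2 * sqnorm v) (e / (`|v| + 1))).
  by rewrite divr_gt0.
move=> s s0 se.
have Xw : X (z + s *: v).
  apply: be; rewrite -ball_normE /ball_ /=.
  rewrite opprD addrA subrr sub0r normrN normrZ gtr0_norm //.
  rewrite ltr_pdivlMr // mulrDr mulr1 in se.
  by apply: le_lt_trans se; rewrite lerDl ltW.
have h1 := zmin _ Xw; rewrite addrC in h1; have := up _ Xw.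
rewrite (addrC z) addrK dotpZr sqnormZ => h2.
have : 0 <= s * (dotp (grad phi z) v + s * (L / 2 * sqnorm v)).
  have -> : s * (dotp (grad phi z) v + s * (L / 2 * sqnorm v)) =
            s * dotp (grad phi z) v + L / 2 * (s ^+ 2 * sqnorm v) by ring.
  lra.
by rewrite pmulr_rge0.
Qed.

Lemma step_contract (X : set vec) (phi : vec -> R) (mu L : R) (z x : vec) :
  closed X -> X !=set0 -> convex_set_of X -> 0 < mu -> mu <= L ->
  (forall x y, X x -> X y ->
     mu / 2 * sqnorm (y - x) <= phi y - phi x - dotp (grad phi x) (y - x) /\
     phi y - phi x - dotp (grad phi x) (y - x) <= L / 2 * sqnorm (y - x)) ->
  X z -> (forall w, X w -> phi z + mu / 2 * sqnorm (w - z) <= phi w) -> X x ->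
  sqnorm (Defs.proj X (x - L^-1 *: grad phi x) - z) <= (L - mu) / (L + mu) * sqnorm (x - z).
Proof.
move=> cX X0 cvX m0 mL hs Xz zmin Xx.
have L0 : 0 < L by apply: lt_le_trans mL.
set g := grad phi x.
have [Xp VI] := proj_spec X (x - L^-1 *: g) cX X0 cvX.
set p := Defs.proj _ _ in Xp VI *.
have VI' := VI z Xz.
have e1 : p - (x - L^-1 *: g) = (p - x) + L^-1 *: g.
  by rewrite opprB addrA addrAC (addrC p) -addrA; congr (_ + _); rewrite addrC.
rewrite e1 dotpDl dotpZl in VI'.
have VI2 : 0 <= L * dotp (p - x) (z - p) + dotp g (z - p).
  have := mulr_ge0 (ltW L0) VI'; rewrite mulrDr mulrA mulfV ?gt_eqF // mul1r.
  done.
have [_ h1] := hs x p Xx Xp.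
have [h2 _] := hs x z Xx Xz.
have h4 := zmin p Xp.
have ezx : z - x = (p - x) + (z - p) by apply/rowP => i; rewrite !mxE; ring.
have eG : dotp g (z - x) = dotp g (p - x) + dotp g (z - p).
  by rewrite -dotpDr -ezx.
have eB : sqnorm (z - x) = sqnorm (p - x) + 2 * dotp (p - x) (z - p) + sqnorm (z - p).
  by rewrite -sqnormD -ezx.
have eC : sqnorm (z - p) = sqnorm (p - z) by rewrite sqnorm_sym.
have eX : sqnorm (x - z) = sqnorm (z - x) by rewrite sqnorm_sym.
have key : (L + mu) * sqnorm (p - z) <= (L - mu) * sqnorm (x - z).
  rewrite eX eB -eC.
  have eL : L * sqnorm (p - x) + 2 * (L * dotp (p - x) (z - p)) =
            L * (sqnorm (p - x) + 2 * dotp (p - x) (z - p)) by ring.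
  nra.
have Lm : 0 < L + mu by rewrite addr_gt0.
rewrite mulrAC ler_pdivlMr //; by rewrite mulrC.
Qed.

Lemma qK_le (mu L : R) (K : nat) : 0 < mu -> mu <= L ->
  (K%:R : R) = (Num.ceil ((L + mu) / (2 * mu) * ln 4))%:~R ->
  ((L - mu) / (L + mu)) ^+ K <= 4^-1.
Proof.
move=> m0 mL hK.
have Lm : 0 < L + mu by apply: addr_gt0 => //; apply: lt_le_trans mL.
set c := 2 * mu / (L + mu).
have c0 : 0 < c by rewrite /c divr_gt0 // mulr_gt0.
have eq : (L - mu) / (L + mu) = 1 + - c by rewrite /c; field; rewrite gt_eqF.
have q0 : 0 <= (L - mu) / (L + mu) by rewrite divr_ge0 ?subr_ge0 // ltW.
have h1 : ((L - mu) / (L + mu)) ^+ K <= expR (- c) ^+ K.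
  apply: lerXn2r; rewrite ?nnegrE ?expR_ge0 //.
  by rewrite eq; apply: expR_ge1Dx.
apply: (le_trans h1); rewrite -expRM_natr.
have h4 : (4 : R)^-1 = expR (- ln 4) by rewrite expRN lnK // posrE.
rewrite h4 ler_expR mulNr lerN2.
have hc : (L + mu) / (2 * mu) * ln 4 <= K%:R by rewrite hK; exact: ceil_ge.
have e2 : ln 4 = c * ((L + mu) / (2 * mu) * ln 4).
  by rewrite /c; field; rewrite !gt_eqF // mulr_gt0.
rewrite e2 ler_pM2l //.
Qed.

Lemma step_in (X : set vec) (f : nat -> vec -> R) (L : R) s w :
  closed X -> X !=set0 -> convex_set_of X -> X (omgd_step X f L s w).
Proof. by move=> cX X0 cvX; have [] := proj_spec X (w - L^-1 *: grad (f s) w) cX X0 cvX. Qed.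

Lemma iter_in (X : set vec) (f : nat -> vec -> R) (L : R) s k w :
  closed X -> X !=set0 -> convex_set_of X -> X w -> X (iter k (omgd_step X f L s) w).
Proof.
move=> cX X0 cvX Xw; case: k => [|k] //=; exact: step_in.
Qed.

Lemma iter_contract (X : set vec) (f : nat -> vec -> R) (mu L : R) s (z : vec) k x :
  closed X -> X !=set0 -> convex_set_of X -> 0 < mu -> mu <= L ->
  (forall x y, X x -> X y ->
     mu / 2 * sqnorm (y - x) <= f s y - f s x - dotp (grad (f s) x) (y - x) /\
     f s y - f s x - dotp (grad (f s) x) (y - x) <= L / 2 * sqnorm (y - x)) ->
  X z -> (forall w, X w -> f s z + mu / 2 * sqnorm (w - z) <= f s w) -> X x ->
  sqnorm (iter k (omgd_step X f L s) x - z) <= ((L - mu) / (L + mu)) ^+ k * sqnorm (x - z).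
Proof.
move=> cX X0 cvX m0 mL hs Xz zmin Xx.
have q0 : 0 <= (L - mu) / (L + mu).
  by rewrite divr_ge0 ?subr_ge0 // ltW // addr_gt0 // (lt_le_trans m0 mL).
elim: k => [|k IH]; first by rewrite expr0 mul1r.
rewrite iterS exprS -mulrA.
have h := step_contract X (f s) mu L z (iter k (omgd_step X f L s) x) cX X0 cvX m0 mL hs Xz zmin (iter_in X f L s k x cX X0 cvX Xx).
apply: le_trans h _.
by rewrite ler_wpM2l.
Qed.

Lemma shift_sum (E : nat -> R) n :
  \sum_(1 <= t < n.+1) E t.-1 + E n = E 0 + \sum_(1 <= t < n.+1) E t.
Proof.
elim: n => [|n IH]; first by rewrite !big_geq // add0r addr0.
by rewrite (@big_nat_recr _ _ _ n.+1 1 (fun t => E t.-1)) // (@big_nat_recr _ _ _ n.+1 1 E) //= IH addrA.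
Qed.

Lemma shift_le (E : nat -> R) n : E 0 = 0 -> (forall t, 0 <= E t) ->
  \sum_(1 <= t < n.+1) E t.-1 <= \sum_(1 <= t < n.+1) E t.
Proof.
move=> E0 Eg; have := shift_sum E n; rewrite E0 add0r => <-.
by rewrite lerDl.
Qed.

Lemma prevE (x0 : vec) (y : nat -> vec) t :
  (if t is t'.+1 then (if t' is 0 then x0 else y t') else x0) =
  (if t.-1 is 0 then x0 else y t.-1).
Proof. by case: t => [|[|n]]. Qed.

Lemma main_thm (T : nat) (X : set vec) (mu L : R)
  (f : nat -> vec -> R) (K : nat) :
  (1 <= T)%N ->
  X !=set0 -> closed X -> convex_set_of X -> X 0 ->
  0 < mu -> mu <= L ->
  (forall t, (1 <= t <= T)%N -> forall x, X x -> 0 <= f t x) ->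
  (forall t, (1 <= t <= T)%N -> forall x, X x -> differentiable (f t) x) ->
  (forall t, (1 <= t <= T)%N -> forall x y, X x -> X y ->
     mu / 2 * enorm (y - x) ^+ 2 <= f t y - f t x - dotp (grad (f t) x) (y - x)
     /\ f t y - f t x - dotp (grad (f t) x) (y - x) <= L / 2 * enorm (y - x) ^+ 2) ->
  (forall t, (1 <= t <= T)%N -> forall xs, X xs ->
     (forall x, X x -> f t xs <= f t x) -> (interior X) xs) ->
  (K%:R : R) = (Num.ceil ((L + mu) / (2 * mu) * ln 4))%:~R ->
  C_OMGD X f L K T 0 <= (4 * (L + 5) + 16 * (L + 5) / mu) * C_OPT X f T 0.
Proof.
move=> T1 X0 cX cvX X00 m0 mL fpos fdiff hs0 hint hK.
have L0 : 0 < L by apply: lt_le_trans mL.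
have hs : forall t, (1 <= t <= T)%N -> forall x y, X x -> X y ->
     mu / 2 * sqnorm (y - x) <= f t y - f t x - dotp (grad (f t) x) (y - x)
     /\ f t y - f t x - dotp (grad (f t) x) (y - x) <= L / 2 * sqnorm (y - x).
  by move=> t ht x y Xx Xy; have := hs0 t ht x y Xx Xy; rewrite !enorm_sq.
have exmin : forall t, (1 <= t <= T)%N ->
    exists z, [set z | X z /\ forall w, X w -> f t z <= f t w] z.
  move=> t ht.
  set g0 := grad (f t) 0.
  have b0 : 0 < mu / 4 by rewrite divr_gt0.
  have a0 : 0 <= mu^-1 * sqnorm g0 by rewrite mulr_ge0 ?invr_ge0 ?sqnorm_ge0 // ltW.
  have cont : forall x, X x -> {for x, continuous (f t)}.
    by move=> x Xx; exact: differentiable_continuous (fdiff t ht x Xx).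
  have coer : forall w, X w ->
      f t 0 - mu^-1 * sqnorm g0 + mu / 4 * sqnorm (w - 0) <= f t w.
    move=> w Xw; have [h _] := hs t ht 0 w X00 Xw.
    have := young_lb mu g0 (w - 0) m0.
    rewrite -/g0 in h; lra.
  have [z [Xz hz]] := exists_argmin X (f t) 0 (mu^-1 * sqnorm g0) (mu / 4) cX X00 cont b0 a0 coer.
  by exists z.
pose xs t := if (1 <= t <= T)%N then xget 0 [set z | X z /\ forall w, X w -> f t z <= f t w] else 0.
have xs0 : xs 0%N = 0 by [].
have xsP : forall t, (1 <= t <= T)%N -> X (xs t) /\ forall w, X w -> f t (xs t) <= f t w.
  by move=> t ht; rewrite /xs ht; exact: (xgetPex 0 (exmin t ht)).
have xsg : forall t, (1 <= t <= T)%N -> forall v, dotp (grad (f t) (xs t)) v = 0.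
  move=> t ht; have [Xz hz] := xsP t ht.
  exact: (grad0 X (f t) (xs t) L (hint t ht _ Xz hz) hz
           (fun w Xw => proj2 (hs t ht (xs t) w Xz Xw))).
have lowmin : forall t, (1 <= t <= T)%N -> forall w, X w ->
    f t (xs t) + mu / 2 * sqnorm (w - xs t) <= f t w.
  move=> t ht w Xw; have [Xz _] := xsP t ht.
  have [h _] := hs t ht (xs t) w Xz Xw; rewrite xsg // in h; lra.
have upmin : forall t, (1 <= t <= T)%N -> forall w, X w ->
    f t w <= f t (xs t) + L / 2 * sqnorm (w - xs t).
  move=> t ht w Xw; have [Xz _] := xsP t ht.
  have [_ h] := hs t ht (xs t) w Xz Xw; rewrite xsg // in h; lra.
pose x := omgd X f L K 0.
have x0 : x 0%N = 0 by [].
have x1 : x 1%N = 0 by [].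
have xS : forall n, x n.+2 = iter K (omgd_step X f L n.+1) (x n.+1) by [].
have xX : forall t, X (x t).
  elim=> [|n IH]; first by rewrite x0.
  case: n IH => [|n] IH; first by rewrite x1.
  rewrite xS; exact: (iter_in X f L n.+1 K _ cX X0 cvX IH).
have qK := qK_le mu L K m0 mL hK.
pose E t := sqnorm (x t - xs t).
have E0 : E 0%N = 0 by rewrite /E x0 xs0 subr0 sqnorm0.
have Eg : forall t, 0 <= E t by move=> t; exact: sqnorm_ge0.
have contr : forall t, (1 <= t <= T)%N -> sqnorm (x t - xs t.-1) <= 4^-1 * E t.-1.
  case=> [|[|n]] ht //.
    by rewrite /= x1 xs0 subr0 sqnorm0 E0 mulr0.
  have hn : (1 <= n.+1 <= T)%N by move: ht => /andP[_ h]; rewrite /= ltnW.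
  have [Xz _] := xsP _ hn.
  rewrite xS /=.
  have h := iter_contract X f mu L (n.+1) (xs n.+1) K (x n.+1) cX X0 cvX m0 mL
     (hs _ hn) Xz (lowmin _ hn) (xX _).
  apply: (le_trans h); rewrite ler_wpM2r //; exact: Eg.
pose P t := sqnorm (xs t - xs t.-1).
have Erec : forall t, (1 <= t <= T)%N -> E t <= 2^-1 * E t.-1 + 2 * P t.
  move=> t ht.
  have e : x t - xs t = (x t - xs t.-1) + (xs t.-1 - xs t) by rewrite addrA subrK.
  have := sqnorm_add2 (x t - xs t.-1) (xs t.-1 - xs t).
  rewrite -e -/(E t) (sqnorm_sym (xs t.-1)) -/(P t).
  have := contr t ht; lra.
have swb : forall t, (1 <= t <= T)%N -> sqnorm (x t - x t.-1) <= 9 / 4 * E t.-1.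
  move=> t ht.
  have e : x t - x t.-1 = (x t - xs t.-1) + (xs t.-1 - x t.-1) by rewrite addrA subrK.
  have h2 : (0 : R) < 2 by [].
  have := sqnorm_addle 2 (x t - xs t.-1) (xs t.-1 - x t.-1) h2.
  rewrite -e (sqnorm_sym (xs t.-1)) -/(E t.-1).
  have := contr t ht; have := Eg t.-1.
  have -> : (1 + 2^-1 : R) = 3 / 2 by field.
  have -> : (1 + 2 : R) = 3 by [].
  lra.
set Sm := \sum_(1 <= t < T.+1) f t (xs t).
set SE := \sum_(1 <= t < T.+1) E t.
set SE' := \sum_(1 <= t < T.+1) E t.-1.
set SP := \sum_(1 <= t < T.+1) P t.
have hSE' : SE' <= SE := shift_le E T E0 Eg.
have hSE : SE <= 4 * SP.
  have : SE <= 2^-1 * SE' + 2 * SP.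
    rewrite /SE /SP /SE' !mulr_sumr -big_split; apply: ler_sum_nat => t /andP[t1 tT].
    by apply: Erec; rewrite t1.
  lra.
have hC : C_OMGD X f L K T 0 <= Sm + (L / 2 * SE + 9 / 8 * SE').
  rewrite /C_OMGD /qs_cost /Sm /SE /SE' !mulr_sumr -!big_split.
  apply: ler_sum_nat => t /andP[t1 tT].
  have ht : (1 <= t <= T)%N by rewrite t1.
  rewrite prevE -/x.
  have -> : (if t.-1 is 0 then 0 else x t.-1) = x t.-1 by case: (t.-1).
  rewrite enorm_sq.
  have := upmin t ht (x t) (xX t); have := swb t ht; rewrite -/(E t) /=.
  lra.
set B := 4 * (L + 5) + 16 * (L + 5) / mu.
have B1 : 1 <= B.
  have : 0 <= 16 * (L + 5) / mu by rewrite divr_ge0 ?mulr_ge0 ?addr_ge0 // ltW.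
  rewrite /B; lra.
have Bp : 0 < B by apply: lt_le_trans B1.
have Sm0 : 0 <= Sm.
  rewrite /Sm big_nat_cond; apply: sumr_ge0 => t /andP[/andP[t1 tT] _].
  have ht : (1 <= t <= T)%N by rewrite t1.
  by apply: fpos => //; have [] := xsP t ht.
have SP0 : 0 <= SP by apply: sumr_ge0 => t _; exact: sqnorm_ge0.
rewrite -ler_pdivrMl //.
apply: lb_le_inf.
  exists (qs_cost f T 0 (fun=> 0)); exists (fun=> 0); split => // t _.
move=> c [y [yX ->]].
rewrite ler_pdivrMl //.
pose yh t := if t is 0 then 0 else y t.
pose A t := sqnorm (yh t - xs t).
pose Bt t := sqnorm (y t - yh t.-1).
have A0 : A 0%N = 0 by rewrite /A /= xs0 subr0 sqnorm0.
have Ag : forall t, 0 <= A t by move=> t; exact: sqnorm_ge0.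
set SA := \sum_(1 <= t < T.+1) A t.
set SA' := \sum_(1 <= t < T.+1) A t.-1.
set SB := \sum_(1 <= t < T.+1) Bt t.
have hSA' : SA' <= SA := shift_le A T A0 Ag.
have SA0 : 0 <= SA by apply: sumr_ge0 => t _.
have SB0 : 0 <= SB by apply: sumr_ge0 => t _; exact: sqnorm_ge0.
have hcost : Sm + (mu / 2 * SA + 2^-1 * SB) <= qs_cost f T 0 y.
  rewrite /qs_cost /Sm /SA /SB !mulr_sumr -!big_split.
  apply: ler_sum_nat => t /andP[t1 tT].
  have ht : (1 <= t <= T)%N by rewrite t1.
  rewrite prevE.
  have -> : (if t.-1 is 0 then 0 else y t.-1) = yh t.-1 by case: (t.-1).
  rewrite enorm_sq -/(Bt t).
  have e : yh t = y t by case: t t1 {ht tT}.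
  have := lowmin t ht (y t) (yX t ht); rewrite /A e /=.
  lra.
have hP : SP <= (2 + mu / 2) * (SA + SA') + (1 + 4 / mu) * SB.
  rewrite /SP /SA /SA' /SB -big_split /= !mulr_sumr -!big_split.
  apply: ler_sum_nat => t /andP[t1 tT].
  have e : xs t - xs t.-1 = ((xs t - yh t) + (yh t.-1 - xs t.-1)) + (yh t - yh t.-1).
    by apply/rowP => i; rewrite !mxE; ring.
  have c0 : 0 < mu / 4 by rewrite divr_gt0.
  have h1 := sqnorm_addle (mu / 4) ((xs t - yh t) + (yh t.-1 - xs t.-1)) (yh t - yh t.-1) c0.
  have h2 := sqnorm_add2 (xs t - yh t) (yh t.-1 - xs t.-1).
  have eB : sqnorm (yh t - yh t.-1) = Bt t by rewrite /Bt; case: t t1 {tT e h1 h2}.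
  rewrite /P e /=.
  rewrite eB (sqnorm_sym (xs t)) -/(A t) -/(A t.-1) in h1 h2.
  rewrite invf_div in h1.
  have c1 : 0 <= 1 + mu / 4 by rewrite addr_ge0 // ltW.
  have h3 := ler_wpM2l c1 h2.
  have ec : (1 + mu / 4) * (2 * A t + 2 * A t.-1) = (2 + mu / 2) * (A t + A t.-1) by field.
  rewrite ec in h3.

  lra.
have k1 : 0 <= L / 2 + 9 / 8 by apply: addr_ge0; [rewrite divr_ge0 // ltW|].
have c2 : C_OMGD X f L K T 0 <= Sm + (2 * L + 9 / 2) * SP.
  have h := ler_wpM2l k1 hSE.
  have e : (L / 2 + 9 / 8) * (4 * SP) = (2 * L + 9 / 2) * SP by field.
  rewrite e in h.
  have e2 : (L / 2 + 9 / 8) * SE = L / 2 * SE + 9 / 8 * SE by ring.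
  rewrite e2 in h.
  lra.
have c3 : SP <= (4 + mu) * SA + (1 + 4 / mu) * SB.
  have k2 : 0 <= 2 + mu / 2 by apply: addr_ge0; [|rewrite divr_ge0 // ltW].
  have h : SA + SA' <= 2 * SA by lra.
  have h' := ler_wpM2l k2 h.
  have e : (2 + mu / 2) * (2 * SA) = (4 + mu) * SA by field.
  rewrite e in h'.
  lra.
have k3 : 0 <= 2 * L + 9 / 2 by apply: addr_ge0; [rewrite mulr_ge0 // ltW|].
have c4 := ler_wpM2l k3 c3.
have c5 : Sm + (2 * L + 9 / 2) * ((4 + mu) * SA + (1 + 4 / mu) * SB) <=
          B * (Sm + (mu / 2 * SA + 2^-1 * SB)).
  rewrite -subr_ge0.
  have e : B * (Sm + (mu / 2 * SA + 2^-1 * SB)) -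
           (Sm + (2 * L + 9 / 2) * ((4 + mu) * SA + (1 + 4 / mu) * SB)) =
           (B - 1) * Sm + 11 / 2 * (mu + 4) * SA + 11 / 2 * (1 + 4 / mu) * SB.
    by rewrite /B; field; rewrite gt_eqF.
  rewrite e.
  have p1 : 0 <= (B - 1) * Sm by rewrite mulr_ge0 // subr_ge0.
  have p2 : 0 <= 11 / 2 * (mu + 4) * SA by rewrite !mulr_ge0 // addr_ge0 // ltW.
  have p3 : 0 <= 11 / 2 * (1 + 4 / mu) * SB.
    by rewrite !mulr_ge0 // addr_ge0 // divr_ge0 // ltW.
  lra.
have c6 := ler_wpM2l (ltW Bp) hcost.
lra.
Qed.
End Main.

Theorem theorem1 (R : realType) (d T : nat) (X : set 'rV[R]_d) (mu L : R)
  (f : nat -> 'rV[R]_d -> R) (K : nat) :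
  (1 <= d)%N -> (1 <= T)%N ->
  X !=set0 -> closed X -> convex_set_of X -> X 0 ->
  0 < mu -> mu <= L ->
  (forall t, (1 <= t <= T)%N -> forall x, X x -> 0 <= f t x) ->
  (forall t, (1 <= t <= T)%N -> forall x, X x -> differentiable (f t) x) ->
  (forall t, (1 <= t <= T)%N -> forall x y, X x -> X y ->
     mu / 2 * enorm (y - x) ^+ 2 <= f t y - f t x - dotp (grad (f t) x) (y - x)
     /\ f t y - f t x - dotp (grad (f t) x) (y - x) <= L / 2 * enorm (y - x) ^+ 2) ->
  (forall t, (1 <= t <= T)%N -> forall xs, X xs ->
     (forall x, X x -> f t xs <= f t x) -> (interior X) xs) ->
  (K%:R : R) = (Num.ceil ((L + mu) / (2 * mu) * ln 4))%:~R ->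
  C_OMGD X f L K T 0 <= (4 * (L + 5) + 16 * (L + 5) / mu) * C_OPT X f T 0.
Proof.
move=> _ T1 X0 cX cvX X00 m0 mL fpos fdiff hs hint hK.
exact: (@main_thm R d T X mu L f K T1 X0 cX cvX X00 m0 mL fpos fdiff hs hint hK).
Qed.
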